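(* Let $W_1,\dots,W_N\in\{1,-1\}$ with both values occurring, let $\mathbf{K}_\phi\in\mathbb{R}^{N\times N}$ be the matrix $[\mathbf{K}_\phi]_{ij}=W_iW_j\langle\phi(\mathbf{X}_i),\phi(\mathbf{X}_j)\rangle$ for some feature map $\phi$ into a Hilbert space, and suppose $\mathbf{K}_\phi$ has full rank. Let $\lambda\ge 0$ be such that an optimal solution of $$\min_{\boldsymbol{\alpha}}\ \boldsymbol{\alpha}^\top\mathbf{K}_\phi\boldsymbol{\alpha}-2\lambda\mathbf{1}^\top\boldsymbol{\alpha}\quad\text{s.t.}\quad \mathbf{W}^\top\boldsymbol{\alpha}=0,\ \mathbf{0}\preceq\boldsymbol{\alpha}\preceq\mathbf{1}$$ is an optimal solution of $\min_{\boldsymbol{\alpha}\in\mathcal{A}}\boldsymbol{\alpha}^\top\mathbf{K}_\phi\boldsymbol{\alpha}$, where $\mathcal{A}=\{\boldsymbol{\alpha}:\mathbf{0}\preceq\boldsymbol{\alpha}\preceq\mathbf{1},\ \sum_{i:W_i=1}\alpha_i=\sum_{i:W_i=-1}\alpha_i=1\}$. Then $\lambda>0$.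
   Context: $\preceq$ denotes entrywise inequality, $\mathbf{W}=(W_1,\dots,W_N)^\top$, $\mathbf{1}$ the all-ones vector. $W_i=1$ indicates a treated unit and $W_i=-1$ a control unit. *)

(* Defs.v *)
From HB Require Import structures.
From mathcomp Require Import all_boot all_order all_algebra.
From mathcomp Require Import reals.
Set Implicit Arguments. Unset Strict Implicit. Unset Printing Implicit Defensive.
Import Order.TTheory GRing.Theory Num.Theory.
Local Open Scope ring_scope.

Definition is_inner_product (R : realType) (V : lmodType R) (ip : V -> V -> R) : Prop :=
  [/\ (forall x y : V, ip x y = ip y x),
      (forall (a : R) (x y z : V), ip (a *: x + y) z = a * ip x z + ip y z)
    & (forall x : V, x != 0 -> 0 < ip x x)].

Definition Kphi (R : realType) (V : lmodType R) (ip : V -> V -> R)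
  (T : Type) (phi : T -> V) (N : nat) (X : 'I_N -> T) (W : 'cV[R]_N) : 'M[R]_N :=
  \matrix_(i, j) (W i 0 * W j 0 * ip (phi (X i)) (phi (X j))).

Definition qform (R : realType) (N : nat) (K : 'M[R]_N) (a : 'cV[R]_N) : R :=
  (a^T *m K *m a) 0 0.

Definition in_box (R : realType) (N : nat) (a : 'cV[R]_N) : Prop :=
  forall i, 0 <= a i 0 <= 1.

Definition feas1 (R : realType) (N : nat) (W : 'cV[R]_N) (a : 'cV[R]_N) : Prop :=
  (W^T *m a) 0 0 = 0 /\ in_box a.

Definition obj1 (R : realType) (N : nat) (K : 'M[R]_N) (lam : R) (a : 'cV[R]_N) : R :=
  qform K a - 2 * lam * \sum_i a i 0.

Definition opt1 (R : realType) (N : nat) (K : 'M[R]_N) (W : 'cV[R]_N) (lam : R)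
  (a : 'cV[R]_N) : Prop :=
  feas1 W a /\ forall b, feas1 W b -> obj1 K lam a <= obj1 K lam b.

Definition setA (R : realType) (N : nat) (W : 'cV[R]_N) (a : 'cV[R]_N) : Prop :=
  [/\ in_box a, \sum_(i | W i 0 == 1) a i 0 = 1 & \sum_(i | W i 0 == -1) a i 0 = 1].

Definition opt2 (R : realType) (N : nat) (K : 'M[R]_N) (W : 'cV[R]_N)
  (a : 'cV[R]_N) : Prop :=
  setA W a /\ forall b, setA W b -> qform K a <= qform K b.

(* Main.v *)
Require Import Defs.
From HB Require Import structures.
From mathcomp Require Import all_boot all_order all_algebra.
From mathcomp Require Import reals.
From mathcomp Require Import ring.
Import Order.TTheory GRing.Theory Num.Theory.
Local Open Scope ring_scope.

Section H.
Variables (R : realType) (V : lmodType R) (ip : V -> V -> R).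
Hypothesis ipL : forall (a : R) (x y z : V), ip (a *: x + y) z = a * ip x z + ip y z.

Lemma ip0l z : ip 0 z = 0.
Proof.
have := ipL 1 0 0 z; rewrite scale1r addr0 mul1r => h.
by apply/(addrI (ip 0 z)); rewrite addr0 -h.
Qed.

Lemma ip_suml n (c : 'I_n -> R) (x : 'I_n -> V) z :
  ip (\sum_i c i *: x i) z = \sum_i c i * ip (x i) z.
Proof.
elim/big_rec2: _ => [|i y1 y2 _ <-]; first exact: ip0l.
by rewrite ipL.
Qed.
End H.

Theorem lemma1 (R : realType) (V : lmodType R) (ip : V -> V -> R)
  (T : Type) (phi : T -> V) (N : nat) (X : 'I_N -> T) (W : 'cV[R]_N) (lam : R) :
  is_inner_product ip ->
  (forall i, W i 0 = 1 \/ W i 0 = -1) ->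
  (exists i, W i 0 = 1) -> (exists j, W j 0 = -1) ->
  \rank (Kphi ip phi X W) = N ->
  0 <= lam ->
  (exists a, opt1 (Kphi ip phi X W) W lam a /\ opt2 (Kphi ip phi X W) W a) ->
  0 < lam.
Proof.
move=> [ipC ipL ipP] _ _ _ rk lam0 [a [[fa opta] [[box s1 s2] _]]].
rewrite lt_neqAle lam0 andbT; apply/eqP => lam_eq; subst lam.
set K := Kphi ip phi X W in rk opta.
have h0 : qform K a <= 0.
  have f0 : feas1 W 0 by split; [rewrite mulmx0 mxE | move=> i; rewrite mxE lexx ler01].
  have := opta 0 f0; rewrite /obj1 !mulr0 !mul0r !subr0 /qform mulmx0.
  by rewrite [X in _ <= X -> _]mxE.
set v := \sum_j (a j 0 * W j 0) *: phi (X j).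
have qv : qform K a = ip v v.
  rewrite /qform mxE ip_suml //.
  apply: eq_bigr => j _; rewrite ipC ip_suml // mxE big_distrl /=.
  rewrite big_distrr /=; apply: eq_bigr => i _; rewrite !mxE ipC; ring.
have v0 : v = 0.
  apply/eqP; apply: contraLR h0 => /ipP hv; by rewrite -ltNge qv.
have Ka : K *m a = 0.
  apply/matrixP => i k; rewrite !mxE (ord1 k).
  transitivity (W i 0 * ip v (phi (X i))).
    rewrite ip_suml // big_distrr /=; apply: eq_bigr => j _.
    by rewrite !mxE ipC; ring.
  by rewrite v0 ip0l // mulr0.
have Ku : K \in unitmx by rewrite -row_free_unit /row_free rk.
have a0 : a = 0 by rewrite -[a]mul1mx -(mulVmx Ku) -mulmxA Ka mulmx0.
  move: s1; rewrite a0 big1 => [|i _]; last by rewrite mxE.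
  by move/eqP; rewrite eq_sym oner_eq0.
Qed.
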